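(* For every $\rho$ with $\frac32<\rho<2$ there exists $a$ with $\frac12<a<1$ such that $${}_1F_2\left(a\,;\rho a,\,\rho a+\tfrac12\,;-\tfrac{x^2}{4}\right)>0\quad\text{for all } x>0.$$
   Context: For $a,b,c>0$, ${}_1F_2\left(a\,;b,c\,;-\frac{x^2}{4}\right)=\sum_{k=0}^\infty \frac{(a)_k}{k!\,(b)_k(c)_k}\left(-\frac{x^2}{4}\right)^k$, where $(\alpha)_k=\Gamma(\alpha+k)/\Gamma(\alpha)$. *)

(* Defs.v *)
From Stdlib Require Import Reals.
From Coquelicot Require Import Coquelicot.
Open Scope R_scope.

Fixpoint pochhammer (alpha : R) (k : nat) : R :=
  match k with
  | O => 1
  | S k' => pochhammer alpha k' * (alpha + INR k')
  end.

Definition hyp1F2_term (a b c z : R) (k : nat) : R :=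
  pochhammer a k / (INR (Factorial.fact k) * pochhammer b k * pochhammer c k) * z ^ k.

Definition hyp1F2 (a b c z : R) : R := Series (hyp1F2_term a b c z).

(* Main.v *)
Require Import Defs.
From Stdlib Require Import Reals Lra Lia.
From Coquelicot Require Import Coquelicot.
Open Scope R_scope.

(* Proof idea: take a = 3/(2 rho), so rho*a = 3/2 and rho*a+1/2 = 2.  Then
   1F2(a;3/2,2;-y^2) is, up to a positive factor, the integral of
   s^(a-1)(1-s)^(-a) (sin(y sqrt s)/(y sqrt s))^2 over (0,1), which is positive. *)

Lemma INR_fact_pos k : 0 < INR (Factorial.fact k).
Proof. apply lt_0_INR. apply Factorial.lt_O_fact. Qed.

Lemma poch2 k : pochhammer 2 k = INR (Factorial.fact (S k)).
Proof.
  induction k as [|k IH]; simpl pochhammer.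
  - simpl. lra.
  - rewrite IH. change (Factorial.fact (S (S k))) with (S (S k) * Factorial.fact (S k))%nat.
    rewrite mult_INR. rewrite !S_INR. ring.
Qed.

Lemma poch_ge1 b k : 1 <= b -> 1 <= pochhammer b k.
Proof.
  intro Hb. induction k as [|k IH]; simpl pochhammer; [lra|].
  assert (0 <= INR k) by apply pos_INR. nra.
Qed.

Lemma poch_pos b k : 0 < b -> 0 < pochhammer b k.
Proof.
  intro Hb. induction k as [|k IH]; simpl pochhammer; [lra|].
  assert (0 <= INR k) by apply pos_INR. nra.
Qed.

Definition cc (k : nat) : R := / (pochhammer (3/2) k * pochhammer 2 k).

Lemma poch_prod k : pochhammer (3/2) k * pochhammer 2 k * (2 * 4 ^ k) = INR (Factorial.fact (2 * k + 2)).
Proof.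
  induction k as [|k IH].
  - simpl. lra.
  - simpl pochhammer.
    replace (2 * S k + 2)%nat with (S (S (2 * k + 2))) by lia.
    change (Factorial.fact (S (S (2 * k + 2)))) with
      (S (S (2 * k + 2)) * (S (2 * k + 2) * Factorial.fact (2 * k + 2)))%nat.
    rewrite !mult_INR, <- IH, !S_INR, plus_INR, mult_INR. change (4 ^ S k) with (4 * 4 ^ k). simpl (INR 2). field.
Qed.

Lemma cc_fact k : cc k = 2 * 4 ^ k / INR (Factorial.fact (2 * k + 2)).
Proof.
  unfold cc. rewrite <- poch_prod.
  assert (h1 := poch_ge1 (3/2) k ltac:(lra)).
  assert (h2 := poch_pos 2 k ltac:(lra)).
  assert (0 < 4 ^ k) by (apply pow_lt; lra).
  field. repeat split; lra.
Qed.

Lemma cc_pos k : 0 < cc k.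
Proof.
  unfold cc. assert (h1 := poch_ge1 (3/2) k ltac:(lra)).
  assert (h2 := poch_pos 2 k ltac:(lra)). apply Rinv_0_lt_compat. nra.
Qed.

Lemma cc_le k : (INR k + 1) * cc k <= / INR (Factorial.fact k).
Proof.
  unfold cc. rewrite poch2.
  change (Factorial.fact (S k)) with (S k * Factorial.fact k)%nat.
  rewrite mult_INR, S_INR.
  assert (h1 := poch_ge1 (3/2) k ltac:(lra)).
  assert (h3 := INR_fact_pos k). assert (h4 := pos_INR k).
  rewrite Rinv_mult, Rinv_mult.
  assert (/ pochhammer (3/2) k <= 1).
  { rewrite <- Rinv_1. apply Rinv_le_contravar; lra. }
  assert (0 < / pochhammer (3/2) k) by (apply Rinv_0_lt_compat; lra).
  assert (0 < / INR (Factorial.fact k)) by (apply Rinv_0_lt_compat; lra).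
  replace ((INR k + 1) * (/ pochhammer (3 / 2) k * (/ (INR k + 1) * / INR (Factorial.fact k))))
    with (/ pochhammer (3 / 2) k * / INR (Factorial.fact k)) by (field; lra).
  nra.
Qed.

Lemma cos_is_series x : is_series (fun i => cos_n i * (Rsqr x) ^ i) (cos x).
Proof.
  unfold cos. destruct (exist_cos (Rsqr x)) as [l Hl]. apply is_series_Reals. exact Hl.
Qed.

Lemma sin_series u : u <> 0 -> is_series (fun k => cc k * (-(u^2))^k) ((sin u / u)^2).
Proof.
  intro Hu.
  assert (H := cos_is_series (2 * u)).
  assert (H0 : cos_n 0 * (Rsqr (2*u))^0 = 1) by (unfold cos_n; simpl; field).
  assert (H1 : is_series (fun k => cos_n (S k) * (Rsqr (2*u)) ^ (S k)) (cos (2*u) - 1)).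
  { apply (is_series_incr_1 (fun k => cos_n k * (Rsqr (2*u))^k)). rewrite H0.
    match goal with |- is_series _ ?l => assert (E: l = cos (2*u)) by (compute -[cos]; ring); rewrite E end.
    exact H. }
  apply (is_series_scal (- / (2 * u^2))) in H1.
  replace ((sin u / u)^2) with (scal (- / (2 * u ^ 2)) (cos (2 * u) - 1)).
  2:{ rewrite cos_2a_sin. unfold scal; simpl; unfold mult; simpl. field. auto. }
  revert H1. apply is_series_ext. intro k.
  unfold scal; simpl; unfold mult; simpl.
  rewrite cc_fact. unfold cos_n.
  replace (2 * S k)%nat with (2 * k + 2)%nat by lia.
  assert (h3 := INR_fact_pos (2 * k + 2)).
  unfold Rsqr. replace (u * (u * 1)) with (u^2) by ring.
  replace (2 * u * (2 * u)) with (4 * u^2) by ring.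
  replace (- u ^ 2) with (-1 * u^2) by ring.
  rewrite !Rpow_mult_distr.
  change ((-1) ^ S k) with (-1 * (-1)^k).
  change (4 ^ S k) with (4 * 4^k).
  change ((u^2) ^ S k) with (u^2 * (u^2)^k).
field. split; [lra|]. auto with real.
Qed.

Lemma exp_mono x y : x <= y -> exp x <= exp y.
Proof. intro H. destruct (Rle_lt_or_eq_dec _ _ H) as [h|h]. left; apply exp_increasing; auto. subst; lra. Qed.

Lemma Rp_pos x y : 0 < Rpower x y.
Proof. unfold Rpower. apply exp_pos. Qed.

Lemma Rp_dec x y1 y2 : 0 < x <= 1 -> y1 <= y2 -> Rpower x y2 <= Rpower x y1.
Proof.
  intros Hx Hy. unfold Rpower. apply exp_mono.
  assert (ln x <= 0). { rewrite <- ln_1. apply ln_le; lra. } nra.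
Qed.

Lemma Rp_le1 x y : 0 < x <= 1 -> 0 <= y -> Rpower x y <= 1.
Proof. intros. rewrite <- (Rpower_O x) by lra. apply Rp_dec; lra. Qed.

Lemma Rp_ge1 x y : 0 < x <= 1 -> y <= 0 -> 1 <= Rpower x y.
Proof. intros. rewrite <- (Rpower_O x) at 1 by lra. apply Rp_dec; lra. Qed.

Lemma Rp_le2 x y : 1/2 <= x <= 1 -> -1 <= y <= 0 -> Rpower x y <= 2.
Proof.
  intros Hx Hy. unfold Rpower. rewrite <- (exp_ln 2) by lra. apply exp_mono.
  assert (ln x <= 0). { rewrite <- ln_1. apply ln_le; lra. }
  assert (ln (1/2) <= ln x) by (apply ln_le; lra).
  assert (ln (1/2) = - ln 2). { unfold Rdiv. rewrite Rmult_1_l, ln_Rinv by lra. ring. }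
  assert (0 < ln 2) by (rewrite <- ln_1; apply ln_increasing; lra).
  nra.
Qed.

Definition w (a s : R) := Rpower s (a-1) * Rpower (1-s) (-a).
Definition G (a:R) (k:nat) s := Rpower s (INR k + a) * Rpower (1-s) (1-a).

Lemma Rp_shift s a k : 0 < s -> Rpower s (INR k + a) = s ^ (S k) * Rpower s (a - 1).
Proof.
  intro Hs. replace (INR k + a) with (INR (S k) + (a - 1)) by (rewrite S_INR; ring).
  rewrite Rpower_plus, Rpower_pow by lra. reflexivity.
Qed.

Lemma Rp_shift1 s a : 0 < s -> Rpower s (1 - a) = s * Rpower s (- a).
Proof.
  intro Hs. replace (1 - a) with (1 + - a) by ring.
  rewrite Rpower_plus, Rpower_1 by lra. reflexivity.
Qed.

Lemma G_deriv a k s : 0 < s < 1 ->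
  is_derive (G a k) s (w a s * ((INR k + a) * s ^ k - (INR k + 1) * s ^ (S k))).
Proof.
  intro Hs. unfold G.
  assert (E1 := Rp_shift s a k ltac:(lra)).
  assert (E2 := Rp_shift1 (1 - s) a ltac:(lra)).
  unfold Rpower in E1, E2. unfold w, Rpower. auto_derive.
  - repeat split; lra.
  - replace (1 + - s) with (1 - s) by ring. rewrite E1, E2.
    simpl pow. field. lra.
Qed.

Lemma w_cont a s : 0 < s < 1 -> continuous (w a) s.
Proof.
  intro Hs. apply (ex_derive_continuous (w a)). unfold w, Rpower. auto_derive. repeat split; lra.
Qed.

Lemma w_ge1 a s : 0 < a < 1 -> 0 < s < 1 -> 1 <= w a s.
Proof.
  intros Ha Hs. unfold w.
  assert (1 <= Rpower s (a - 1)) by (apply Rp_ge1; lra).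
  assert (1 <= Rpower (1 - s) (- a)) by (apply Rp_ge1; lra).
  nra.
Qed.

Lemma w_le a s : 0 < a < 1 -> 0 < s < 1 -> w a s <= 2 * (Rpower s (a-1) + Rpower (1-s) (-a)).
Proof.
  intros Ha Hs. unfold w.
  assert (1 <= Rpower s (a - 1)) by (apply Rp_ge1; lra).
  assert (1 <= Rpower (1 - s) (- a)) by (apply Rp_ge1; lra).
  destruct (Rle_dec s (1/2)).
  - assert (Rpower (1 - s) (- a) <= 2) by (apply Rp_le2; lra). nra.
  - assert (Rpower s (a - 1) <= 2) by (apply Rp_le2; lra). nra.
Qed.

Definition D a e k := RInt (fun s => w a s * s ^ k) e (1 - e).

Lemma cont_pow k s : continuous (fun t => t ^ k) s.
Proof. apply (ex_derive_continuous (fun t => t ^ k)). auto_derive. auto. Qed.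

Lemma ex_RInt_w a e (f : R -> R) : 0 < e < 1/2 ->
  (forall s, e <= s <= 1 - e -> continuous f s) ->
  ex_RInt (fun s => w a s * f s) e (1 - e).
Proof.
  intros He Hf. apply (@ex_RInt_continuous R_CompleteNormedModule).
  rewrite Rmin_left, Rmax_right by lra. intros s Hs.
  apply (continuous_mult (w a) f s). apply w_cont; lra. apply Hf; lra.
Qed.

Lemma ex_D a e k : 0 < e < 1/2 -> ex_RInt (fun s => w a s * s ^ k) e (1 - e).
Proof. intro. apply ex_RInt_w; auto. intros; apply cont_pow. Qed.

Lemma D_rec a e k : 0 < e < 1/2 ->
  (INR k + a) * D a e k - (INR k + 1) * D a e (S k) = G a k (1 - e) - G a k e.
Proof.
  intro He.
  assert (Hd := is_RInt_derive (G a k)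
     (fun s => w a s * ((INR k + a) * s ^ k - (INR k + 1) * s ^ (S k))) e (1 - e)).
  rewrite Rmin_left, Rmax_right in Hd by lra.
  assert (Hd' : is_RInt (fun s => w a s * ((INR k + a) * s ^ k - (INR k + 1) * s ^ (S k))) e (1 - e)
             (G a k (1 - e) - G a k e)).
  { apply Hd.
    - intros; apply G_deriv; lra.
    - intros s Hs. apply (continuous_mult (w a) (fun s => ((INR k + a) * s ^ k - (INR k + 1) * s ^ (S k))) s).
      apply w_cont; lra.
      apply (ex_derive_continuous (fun s => ((INR k + a) * s ^ k - (INR k + 1) * s ^ (S k)))).
      auto_derive; auto. }
  assert (I1 := RInt_correct _ _ _ (ex_D a e k He)).
  assert (I2 := RInt_correct _ _ _ (ex_D a e (S k) He)).
  assert (Hc := is_RInt_minus _ _ _ _ _ _ (is_RInt_scal _ _ _ (INR k + a) _ I1) (is_RInt_scal _ _ _ (INR k + 1) _ I2)).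
  change (D a e k) with (RInt (fun s => w a s * s ^ k) e (1 - e)).
  change (D a e (S k)) with (RInt (fun s => w a s * s ^ (S k)) e (1 - e)).
  apply (@is_RInt_unique R_CompleteNormedModule) in Hd'.
  rewrite <- Hd'. symmetry. apply (@is_RInt_unique R_CompleteNormedModule).
  eapply is_RInt_ext; [|exact Hc].
  intros x _. change ((INR k + a) * (w a x * x ^ k) - (INR k + 1) * (w a x * x ^ S k) = w a x * ((INR k + a) * x ^ k - (INR k + 1) * x ^ S k)). ring.
Qed.

Definition r a k := pochhammer a k / INR (Factorial.fact k).

Lemma r_rec a k : r a (S k) * (INR k + 1) = r a k * (a + INR k).
Proof.
  unfold r. simpl pochhammer.
  change (Factorial.fact (S k)) with (S k * Factorial.fact k)%nat.
  rewrite mult_INR, S_INR. assert (h := INR_fact_pos k). assert (h1 := pos_INR k).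
  field. lra.
Qed.

Lemma B_bound a e k : 0 < e < 1/2 -> 1/2 < a < 1 ->
  Rabs (G a k (1 - e) - G a k e) <= Rpower e (1 - a).
Proof.
  intros He Ha. unfold G. replace (1 - (1 - e)) with e by ring.
  assert (h0 := pos_INR k).
  assert (Rpower (1 - e) (INR k + a) <= 1) by (apply Rp_le1; lra).
  assert (Rpower (1 - e) (1 - a) <= 1) by (apply Rp_le1; lra).
  assert (Rpower e (INR k + a) <= Rpower e (1 - a)) by (apply Rp_dec; lra).
  assert (h1 := Rp_pos (1 - e) (INR k + a)).
  assert (h2 := Rp_pos (1 - e) (1 - a)).
  assert (h3 := Rp_pos e (INR k + a)).
  assert (h4 := Rp_pos e (1 - a)).
  assert (Rpower e (INR k + a) * Rpower (1 - e) (1 - a) <= Rpower e (INR k + a)) by nra.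
  assert (Rpower (1 - e) (INR k + a) * Rpower e (1 - a) <= Rpower e (1 - a)) by nra.
  assert (0 <= Rpower (1 - e) (INR k + a) * Rpower e (1 - a)) by nra.
  assert (0 <= Rpower e (INR k + a) * Rpower (1 - e) (1 - a)) by nra.
  apply Rabs_le. split; lra.
Qed.


Lemma err_bound a e k : 0 < e < 1/2 -> 1/2 < a < 1 ->
  Rabs (D a e k - r a k * D a e 0) <= INR k * Rpower e (1 - a).
Proof.
  intros He Ha. induction k as [|k IH].
  - unfold r. simpl. replace (D a e 0 - 1 / 1 * D a e 0) with 0 by field. rewrite Rabs_R0. lra.
  - assert (HR := D_rec a e k He). assert (HB := B_bound a e k He Ha).
    assert (Hr := r_rec a k). assert (h0 := pos_INR k).
    set (X := D a e k - r a k * D a e 0) in *.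
    set (B := G a k (1 - e) - G a k e) in *.
    assert (E : D a e (S k) - r a (S k) * D a e 0 = (INR k + a) / (INR k + 1) * X - B / (INR k + 1)).
    { assert (E1 : D a e (S k) = ((INR k + a) * D a e k - B) / (INR k + 1)).
      { apply (Rmult_eq_reg_r (INR k + 1)); [|lra]. unfold Rdiv. rewrite Rmult_assoc, Rinv_l by lra. lra. }
      assert (E2 : r a (S k) = r a k * (a + INR k) / (INR k + 1)).
      { apply (Rmult_eq_reg_r (INR k + 1)); [|lra]. unfold Rdiv. rewrite Rmult_assoc, Rinv_l by lra. lra. }
      rewrite E1, E2. unfold X. field. lra. }
    rewrite E, S_INR.
    assert (0 < / (INR k + 1) <= 1).
    { split. apply Rinv_0_lt_compat; lra. rewrite <- Rinv_1. apply Rinv_le_contravar; lra. }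
    assert ((INR k + a) * / (INR k + 1) <= 1).
    { apply (Rmult_le_reg_r (INR k + 1)); [lra|]. rewrite Rmult_assoc, Rinv_l by lra. lra. }
    assert (0 <= (INR k + a) * / (INR k + 1)) by (apply Rmult_le_pos; [lra|left; apply Rinv_0_lt_compat; lra]).
    assert (0 <= Rabs X) by apply Rabs_pos. assert (0 <= Rabs B) by apply Rabs_pos.
    eapply Rle_trans. apply Rabs_triang. unfold Rdiv. rewrite Rabs_Ropp, !Rabs_mult.
    rewrite (Rabs_right (INR k + a)) by lra.
    rewrite (Rabs_right (/ (INR k + 1))) by lra.
    assert ((INR k + a) * / (INR k + 1) * Rabs X <= Rabs X) by nra.
    assert (Rabs B * / (INR k + 1) <= Rabs B) by nra.
    lra.
Qed.

Ltac req := match goal with |- @eq _ ?x ?y => change (@eq R x y) end.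

Lemma sumS (f : nat -> R) n : sum_n f (S n) = sum_n f n + f (S n).
Proof. rewrite sum_Sn. reflexivity. Qed.

Lemma sum_abs_le (f g : nat -> R) N : (forall k, Rabs (f k) <= g k) -> Rabs (sum_n f N) <= sum_n g N.
Proof.
  intro H. induction N as [|N IH].
  - rewrite !sum_O. apply H.
  - rewrite !sumS. eapply Rle_trans. apply Rabs_triang. specialize (H (S N)). lra.
Qed.

Lemma sum_le (f g : nat -> R) N : (forall k, f k <= g k) -> sum_n f N <= sum_n g N.
Proof.
  intro H. induction N as [|N IH].
  - rewrite !sum_O. apply H.
  - rewrite !sumS. specialize (H (S N)). lra.
Qed.

Lemma sum_minus (f g : nat -> R) N : sum_n (fun k => f k - g k) N = sum_n f N - sum_n g N.
Proof.
  induction N as [|N IH].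
  - rewrite !sum_O. reflexivity.
  - rewrite !sumS, IH. req. ring.
Qed.

Lemma sum_scal (f : nat -> R) c N : sum_n (fun k => c * f k) N = c * sum_n f N.
Proof.
  induction N as [|N IH].
  - rewrite !sum_O. reflexivity.
  - rewrite !sumS, IH. req. ring.
Qed.

Definition U q k := q ^ k / INR (Factorial.fact k).

Lemma U_series q : is_series (U q) (exp q).
Proof.
  unfold exp. destruct (exist_exp q) as [l Hl]. simpl.
  apply (is_series_ext (fun i => / INR (Factorial.fact i) * q ^ i) (U q)).
  - intro i. unfold U. unfold Rdiv. req. ring.
  - apply is_series_Reals. exact Hl.
Qed.

Lemma U_nonneg q k : 0 <= q -> 0 <= U q k.
Proof.
  intro. unfold U. apply Rdiv_le_0_compat. apply pow_le; auto. apply INR_fact_pos.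
Qed.

Lemma U_partial q N : 0 <= q -> sum_n (U q) N <= exp q.
Proof.
  intro Hq. apply (is_lim_seq_incr_compare (sum_n (U q)) (exp q)).
  - exact (U_series q).
  - intro n. rewrite sumS. assert (h := U_nonneg q (S n) Hq). lra.
Qed.

Lemma tail_bound q (v : nat -> R) l N : 0 <= q -> is_series v l ->
  (forall k, Rabs (v k) <= U q k) -> Rabs (l - sum_n v N) <= exp q - sum_n (U q) N.
Proof.
  intros Hq Hv HU.
  assert (Hm : forall m, Rabs (sum_n v (m + N) - sum_n v N) <= sum_n (U q) (m + N) - sum_n (U q) N).
  { induction m as [|m IH].
    - simpl. replace (sum_n v N - sum_n v N) with 0 by (req; ring). rewrite Rabs_R0. lra.
    - change (S m + N)%nat with (S (m + N)). rewrite !sumS.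
      replace (sum_n v (m + N) + v (S (m + N)) - sum_n v N) with
        ((sum_n v (m + N) - sum_n v N) + v (S (m + N))) by (req; ring).
      eapply Rle_trans. apply Rabs_triang. specialize (HU (S (m + N))). lra. }
  assert (L1 : is_lim_seq (fun m => Rabs (sum_n v (m + N) - sum_n v N)) (Rabs (l - sum_n v N))).
  { apply (is_lim_seq_abs _ (Finite (l - sum_n v N))).
    apply is_lim_seq_minus'. apply (is_lim_seq_incr_n (sum_n v) N l). exact Hv.
    apply is_lim_seq_const. }
  assert (L2 := is_lim_seq_const (exp q - sum_n (U q) N)).
  assert (Hle := is_lim_seq_le _ _ _ _ (fun m => Rle_trans _ _ _ (Hm m)
     (Rplus_le_compat_r _ _ _ (U_partial q (m + N) Hq))) L1 L2).
  simpl in Hle. exact Hle.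
Qed.

Lemma is_RInt_term a e z k : 0 < e < 1/2 ->
  is_RInt (fun s => w a s * (cc k * (z * s) ^ k)) e (1 - e) (cc k * z ^ k * D a e k).
Proof.
  intro He.
  assert (I := is_RInt_scal _ _ _ (cc k * z ^ k) _ (RInt_correct _ _ _ (ex_D a e k He))).
  eapply is_RInt_ext; [|exact I].
  intros s _. change (cc k * z ^ k * (w a s * s ^ k) = w a s * (cc k * (z * s) ^ k)).
  rewrite Rpow_mult_distr. ring.
Qed.

Lemma is_RInt_sum a e z N : 0 < e < 1/2 ->
  is_RInt (fun s => w a s * sum_n (fun k => cc k * (z * s) ^ k) N) e (1 - e)
    (sum_n (fun k => cc k * z ^ k * D a e k) N).
Proof.
  intro He. induction N as [|N IH].
  - rewrite sum_O. eapply is_RInt_ext; [|exact (is_RInt_term a e z 0 He)].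
    intros s _. rewrite sum_O. reflexivity.
  - rewrite sumS.
    assert (I := is_RInt_plus _ _ _ _ _ _ IH (is_RInt_term a e z (S N) He)).
    eapply is_RInt_ext; [|exact I].
    intros s _. rewrite sumS. change (w a s * sum_n (fun k => cc k * (z * s) ^ k) N + w a s * (cc (S N) * (z * s) ^ S N) =
      w a s * (sum_n (fun k => cc k * (z * s) ^ k) N + cc (S N) * (z * s) ^ S N)). ring.
Qed.

Lemma D0_lower a e : 0 < a < 1 -> 0 < e < 1/2 -> 1 - 2 * e <= D a e 0.
Proof.
  intros Ha He. unfold D.
  assert (E : RInt (fun _ => 1) e (1 - e) = 1 - 2 * e).
  { rewrite RInt_const. change (scal (1 - e - e) 1) with ((1 - e - e) * 1). req. ring. }
  rewrite <- E. apply RInt_le; [lra| |apply ex_D; auto|].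
  - apply ex_RInt_const.
  - intros s Hs. simpl. rewrite Rmult_1_r. apply w_ge1; lra.
Qed.

Lemma Rp_m1 s y : 0 < s -> Rpower s (y - 1) = Rpower s y / s.
Proof.
  intro Hs. replace (y - 1) with (y + - (1)) by ring.
  rewrite Rpower_plus, Rpower_Ropp, Rpower_1 by lra. reflexivity.
Qed.

Lemma D0_upper a e : 0 < a < 1 -> 0 < e < 1/2 -> D a e 0 <= 2 * (1 / a + 1 / (1 - a)).
Proof.
  intros Ha He. unfold D.
  set (Fm := fun s => 2 * (Rpower s a / a - Rpower (1 - s) (1 - a) / (1 - a))).
  assert (Hd : is_RInt (fun s => 2 * (Rpower s (a - 1) + Rpower (1 - s) (- a))) e (1 - e) (minus (Fm (1 - e)) (Fm e))).
  { apply (@is_RInt_derive R_CompleteNormedModule).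
    - rewrite Rmin_left, Rmax_right by lra. intros s Hs.
      assert (E1 := Rp_m1 s a ltac:(lra)).
      assert (E2 := Rp_m1 (1 - s) (1 - a) ltac:(lra)).
      replace (1 - a - 1) with (- a) in E2 by ring.
      unfold Fm. unfold Rpower in *. auto_derive.
      + repeat split; lra.
      + replace (1 + - s) with (1 - s) by ring. rewrite E1, E2. field. repeat split; lra.
    - rewrite Rmin_left, Rmax_right by lra. intros s Hs.
      apply (ex_derive_continuous (fun s => 2 * (Rpower s (a - 1) + Rpower (1 - s) (- a)))).
      unfold Rpower. auto_derive. repeat split; lra. }
  assert (Hle : RInt (fun s => w a s * s ^ 0) e (1 - e) <= minus (Fm (1 - e)) (Fm e)).
  { apply (is_RInt_le _ _ e (1 - e) _ _ ltac:(lra) (RInt_correct _ _ _ (ex_D a e 0 He)) Hd).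
    intros s Hs. simpl. rewrite Rmult_1_r. apply w_le; lra. }
  eapply Rle_trans; [exact Hle|].
  change (minus (Fm (1 - e)) (Fm e)) with (Fm (1 - e) - Fm e). unfold Fm.
  replace (1 - (1 - e)) with e by ring.
  assert (Rpower (1 - e) a <= 1) by (apply Rp_le1; lra).
  assert (Rpower e (1 - a) <= 1) by (apply Rp_le1; lra).
  assert (h1 := Rp_pos e a). assert (h2 := Rp_pos (1 - e) (1 - a)). assert (h3 := Rp_pos e (1 - a)).
  assert (Rpower (1 - e) a / a <= 1 / a) by (apply Rmult_le_compat_r; [left; apply Rinv_0_lt_compat|]; lra).
  assert (0 <= Rpower e a / a) by (apply Rdiv_le_0_compat; lra).
  assert (Rpower (1 - e) (1 - a) / (1 - a) <= 1 / (1 - a)).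
  { assert (Rpower (1 - e) (1 - a) <= 1) by (apply Rp_le1; lra).
    apply Rmult_le_compat_r; [left; apply Rinv_0_lt_compat; lra|exact H3]. }
  assert (0 <= Rpower e (1 - a) / (1 - a)) by (apply Rdiv_le_0_compat; lra).
  assert (0 <= Rpower (1 - e) (1 - a) / (1 - a)) by (apply Rdiv_le_0_compat; lra).
  lra.
Qed.

Lemma r_bounds a k : 0 < a < 1 -> 0 <= r a k <= 1.
Proof.
  intro Ha. induction k as [|k IH].
  - unfold r. simpl. lra.
  - assert (Hr := r_rec a k). assert (h := pos_INR k).
    assert (E : r a (S k) = r a k * ((a + INR k) / (INR k + 1))).
    { apply (Rmult_eq_reg_r (INR k + 1)); [|lra]. rewrite Hr. field. lra. }
    assert (0 <= (a + INR k) / (INR k + 1) <= 1).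
    { split. apply Rdiv_le_0_compat; lra.
      apply (Rmult_le_reg_r (INR k + 1)); [lra|]. unfold Rdiv. rewrite Rmult_assoc, Rinv_l by lra. lra. }
    rewrite E. split; nra.
Qed.

Lemma cc_le_fact k : cc k <= / INR (Factorial.fact k).
Proof. assert (h := cc_le k). assert (h1 := cc_pos k). assert (h2 := pos_INR k). nra. Qed.

Lemma kcc_le_fact k : INR k * cc k <= / INR (Factorial.fact k).
Proof. assert (h := cc_le k). assert (h1 := cc_pos k). assert (h2 := pos_INR k). nra. Qed.

Lemma sinc_lower u : 0 < u <= 1 -> 1/4 <= (sin u / u) ^ 2.
Proof.
  intro Hu. assert (HP := PI2_1).
  destruct (sin_bound u 0 ltac:(lra) ltac:(lra)) as [H1 _].
  replace (sin_approx u (2 * 0 + 1)) with (u - u^3/6) in H1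
    by (unfold sin_approx, sin_term; simpl; field).
  assert (5/6 <= sin u / u).
  { apply (Rmult_le_reg_r u); [lra|]. replace (sin u / u * u) with (sin u) by (field; lra). nra. }
  nra.
Qed.

Definition Hf (y s : R) := (sin (y * sqrt s) / (y * sqrt s)) ^ 2.

Lemma Hf_cont y s : 0 < y -> 0 < s -> continuous (Hf y) s.
Proof.
  intros Hy Hs. apply (ex_derive_continuous (Hf y)). unfold Hf. auto_derive.
  assert (0 < sqrt s) by (apply sqrt_lt_R0; lra).
  repeat split; try lra. apply Rgt_not_eq. apply Rmult_lt_0_compat; lra.
Qed.

Lemma Hf_series y s : 0 < y -> 0 < s ->
  is_series (fun k => cc k * ((- y ^ 2) * s) ^ k) (Hf y s).
Proof.
  intros Hy Hs. assert (0 < sqrt s) by (apply sqrt_lt_R0; lra).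
  assert (Hu : y * sqrt s <> 0) by (apply Rgt_not_eq; apply Rmult_lt_0_compat; lra).
  assert (I := sin_series (y * sqrt s) Hu).
  eapply is_series_ext; [|exact I].
  intro k. simpl. f_equal. f_equal.
  replace (y * sqrt s * (y * sqrt s * 1)) with (y * y * (sqrt s * sqrt s)) by ring.
  rewrite sqrt_sqrt by lra. ring.
Qed.

Lemma Hf_ge0 y s : 0 <= Hf y s.
Proof. unfold Hf. apply pow2_ge_0. Qed.

Lemma Hf_lower y s : 0 < y -> 0 < s -> y ^ 2 * s <= 1 -> 1/4 <= Hf y s.
Proof.
  intros Hy Hs Hq. unfold Hf. apply sinc_lower.
  assert (0 < sqrt s) by (apply sqrt_lt_R0; lra).
  assert (E : (y * sqrt s) ^ 2 = y ^ 2 * s).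
  { replace ((y * sqrt s) ^ 2) with (y ^ 2 * (sqrt s * sqrt s)) by ring. rewrite sqrt_sqrt; lra. }
  split. apply Rmult_lt_0_compat; lra. nra.
Qed.

Lemma abs_le_inv x b : Rabs x <= b -> - b <= x <= b.
Proof. unfold Rabs. destruct (Rcase_abs x); lra. Qed.

Lemma perN a y e P N : 1/2 < a < 1 -> 0 < y -> 0 < e < 1/2 ->
  P <= RInt (fun s => w a s * Hf y s) e (1 - e) ->
  Rpower e (1 - a) * exp (y ^ 2) <= P / 2 ->
  0 < P ->
  P / (2 * (2 * (1 / a + 1 / (1 - a)))) - (exp (y ^ 2) - sum_n (U (y ^ 2)) N)
   <= sum_n (fun k => r a k * cc k * (- y ^ 2) ^ k) N.
Proof.
  intros Ha Hy He HJ Heps HP.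
  set (q := y ^ 2) in *. set (z := - q).
  assert (Hq : 0 < q) by (unfold q; apply pow_lt; lra).
  set (M := 2 * (1 / a + 1 / (1 - a))).
  set (T := exp q - sum_n (U q) N).
  set (D0 := D a e 0).
  assert (HD0l := D0_lower a e ltac:(lra) He). assert (HD0u := D0_upper a e ltac:(lra) He).
  fold D0 in HD0l, HD0u. fold M in HD0u.
  set (SN := sum_n (fun k => cc k * z ^ k * D a e k) N).
  set (FN := sum_n (fun k => r a k * cc k * z ^ k) N).
  set (J := RInt (fun s => w a s * Hf y s) e (1 - e)) in *.
  assert (HT : 0 <= T) by (unfold T; assert (h := U_partial q N ltac:(lra)); lra).
  assert (HE : Rabs (SN - D0 * FN) <= Rpower e (1 - a) * exp q).
  { unfold SN, FN. rewrite <- sum_scal, <- sum_minus.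
    eapply Rle_trans.
    - apply (sum_abs_le _ (fun k => Rpower e (1 - a) * U q k)).
      intro k.
      replace (cc k * z ^ k * D a e k - D0 * (r a k * cc k * z ^ k))
        with (cc k * z ^ k * (D a e k - r a k * D0)) by ring.
      rewrite !Rabs_mult, <- RPow_abs.
      assert (Ez : Rabs z = q) by (unfold z; rewrite Rabs_Ropp, Rabs_right; lra).
      rewrite Ez, (Rabs_right (cc k)) by (left; apply cc_pos).
      assert (Hb := err_bound a e k He Ha). fold D0 in Hb.
      assert (Hk := kcc_le_fact k). assert (hc := cc_pos k).
      assert (hq := pow_le q k ltac:(lra)).
      assert (hR := Rp_pos e (1 - a)).
      unfold U. unfold Rdiv.
      assert (cc k * q ^ k * Rabs (D a e k - r a k * D0) <= cc k * q ^ k * (INR k * Rpower e (1 - a))).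
      { apply Rmult_le_compat_l; [nra|exact Hb]. }
      assert (cc k * q ^ k * (INR k * Rpower e (1 - a)) <= Rpower e (1 - a) * (q ^ k * / INR (Factorial.fact k))).
      { replace (cc k * q ^ k * (INR k * Rpower e (1 - a))) with (Rpower e (1 - a) * (q ^ k * (INR k * cc k))) by ring.
        apply Rmult_le_compat_l; [lra|]. apply Rmult_le_compat_l; [lra|exact Hk]. }
      lra.
    - rewrite sum_scal. apply Rmult_le_compat_l. left; apply Rp_pos. apply U_partial; lra. }
  assert (ExJ : ex_RInt (fun s => w a s * Hf y s) e (1 - e)).
  { apply ex_RInt_w; auto. intros; apply Hf_cont; lra. }
  assert (IS := is_RInt_sum a e z N He).
  assert (Idiff := is_RInt_minus _ _ _ _ _ _ (RInt_correct _ _ _ ExJ) IS).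
  assert (IT := is_RInt_scal _ _ _ T _ (RInt_correct _ _ _ (ex_D a e 0 He))).
  assert (ImT := is_RInt_opp _ _ _ _ IT).
  assert (Hpt : forall s, e < s < 1 - e -> Rabs (Hf y s - sum_n (fun k => cc k * (z * s) ^ k) N) <= T).
  { intros s Hs. unfold T. apply tail_bound; [lra| |].
    - unfold z, q. apply Hf_series; lra.
    - intro k. rewrite Rabs_mult, <- RPow_abs.
      assert (Ez : Rabs (z * s) = q * s).
      { unfold z. rewrite Rabs_mult, Rabs_Ropp, !Rabs_right; lra. }
      rewrite Ez, (Rabs_right (cc k)) by (left; apply cc_pos).
      assert (hc := cc_le_fact k). assert (hc0 := cc_pos k).
      assert (h1 : (q * s) ^ k <= q ^ k) by (apply pow_incr; nra).
      assert (h2 : 0 <= (q * s) ^ k) by (apply pow_le; nra).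
      unfold U, Rdiv. assert (0 <= q ^ k) by (apply pow_le; lra).
      assert (0 < / INR (Factorial.fact k)) by (apply Rinv_0_lt_compat, INR_fact_pos).
      nra. }
  assert (Hup : minus J SN <= scal T D0).
  { apply (is_RInt_le _ _ e (1 - e) _ _ ltac:(lra) Idiff IT).
    intros s Hs. specialize (Hpt s Hs). apply abs_le_inv in Hpt.
    assert (1 <= w a s) by (apply w_ge1; lra).
    change (w a s * Hf y s - w a s * sum_n (fun k => cc k * (z * s) ^ k) N <= T * (w a s * s ^ 0)).
    simpl pow. nra. }
  assert (Hlo : opp (scal T D0) <= minus J SN).
  { apply (is_RInt_le _ _ e (1 - e) _ _ ltac:(lra) ImT Idiff).
    intros s Hs. specialize (Hpt s Hs). apply abs_le_inv in Hpt.
    assert (1 <= w a s) by (apply w_ge1; lra).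
    change (- (T * (w a s * s ^ 0)) <= w a s * Hf y s - w a s * sum_n (fun k => cc k * (z * s) ^ k) N).
    simpl pow. nra. }
  change (J - SN <= T * D0) in Hup. change (- (T * D0) <= J - SN) in Hlo.
  apply abs_le_inv in HE.
  clear Idiff IT ImT IS ExJ Hpt. clearbody J D0 SN FN.
  assert (HD0 : 0 < D0) by lra.
  assert (HM : 0 < M) by lra.
  assert (X1 : P / 2 <= D0 * (FN + T)) by lra.
  assert (X2 : D0 * (P / (2 * M)) <= P / 2).
  { replace (P / 2) with (M * (P / (2 * M))) by (field; lra).
    apply Rmult_le_compat_r; [apply Rdiv_le_0_compat; lra | lra]. }
  assert (X3 : P / (2 * M) <= FN + T).
  { apply (Rmult_le_reg_l D0); [lra|]. lra. }
  unfold T, z, q, M in *. lra.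
Qed.

Lemma J_lower a y e d : 1/2 < a < 1 -> 0 < y -> 0 < d <= 1/4 -> y ^ 2 * d <= 1 -> 0 < e <= d / 2 ->
  d / 8 <= RInt (fun s => w a s * Hf y s) e (1 - e).
Proof.
  intros Ha Hy Hd Hyd He.
  assert (He' : 0 < e < 1/2) by lra.
  assert (ExJ : ex_RInt (fun s => w a s * Hf y s) e (1 - e)).
  { apply ex_RInt_w; auto. intros; apply Hf_cont; lra. }
  assert (Ex1 := ex_RInt_Chasles_1 _ e d (1 - e) ltac:(lra) ExJ).
  assert (Ex2 := ex_RInt_Chasles_2 _ e d (1 - e) ltac:(lra) ExJ).
  rewrite <- (RInt_Chasles _ e d (1 - e) Ex1 Ex2).
  change (plus ?x ?y) with (x + y).
  assert (H2 : 0 <= RInt (fun s => w a s * Hf y s) d (1 - e)).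
  { apply RInt_ge_0; [lra|exact Ex2|]. intros s Hs.
    assert (1 <= w a s) by (apply w_ge1; lra). assert (h := Hf_ge0 y s). nra. }
  assert (H1 : RInt (fun _ => 1/4) e d <= RInt (fun s => w a s * Hf y s) e d).
  { apply RInt_le; [lra|apply ex_RInt_const|exact Ex1|]. intros s Hs.
    assert (1 <= w a s) by (apply w_ge1; lra).
    assert (1/4 <= Hf y s).
    { apply Hf_lower; try lra. assert (0 <= y ^ 2) by (apply pow2_ge_0). nra. }
    nra. }
  rewrite RInt_const in H1. change (scal (d - e) (1/4)) with ((d - e) * (1/4)) in H1.
  lra.
Qed.

Lemma key a x : 1/2 < a < 1 -> 0 < x ->
  ex_series (fun k => r a k * cc k * (- x ^ 2 / 4) ^ k) /\
  Series (fun k => r a k * cc k * (- x ^ 2 / 4) ^ k) > 0.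
Proof.
  intros Ha Hx.
  set (y := x / 2). assert (Hy : 0 < y) by (unfold y; lra).
  assert (Hz : - x ^ 2 / 4 = - y ^ 2) by (unfold y; field). rewrite Hz.
  set (q := y ^ 2). assert (Hq : 0 < q) by (unfold q; apply pow_lt; lra).
  assert (Hterm : forall k, Rabs (r a k * cc k * (- q) ^ k) <= U q k).
  { intro k. rewrite !Rabs_mult, <- RPow_abs, Rabs_Ropp, (Rabs_right q) by lra.
    assert (hr := r_bounds a k ltac:(lra)). rewrite (Rabs_right (r a k)) by lra.
    rewrite (Rabs_right (cc k)) by (left; apply cc_pos).
    assert (hc := cc_le_fact k). assert (hc0 := cc_pos k).
    assert (0 <= q ^ k) by (apply pow_le; lra).
    unfold U, Rdiv.
    assert (0 < / INR (Factorial.fact k)) by (apply Rinv_0_lt_compat, INR_fact_pos).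
    assert (r a k * cc k <= / INR (Factorial.fact k)) by nra.
    nra. }
  assert (Hex : ex_series (fun k => r a k * cc k * (- q) ^ k)).
  { apply (@ex_series_le R_AbsRing R_CompleteNormedModule _ (U q)). intro n. exact (Hterm n). exists (exp q). apply U_series. }
  split; [exact Hex|].
  set (d := Rmin (1/4) (1/q)).
  assert (Hd : 0 < d <= 1/4).
  { split. apply Rmin_glb_lt; [lra|]. apply Rdiv_lt_0_compat; lra. apply Rmin_l. }
  assert (Hqd : y ^ 2 * d <= 1).
  { fold q. assert (d <= 1/q) by apply Rmin_r.
    apply (Rmult_le_compat_l q) in H; [|lra]. replace (q * (1/q)) with 1 in H by (field; lra). lra. }
  set (P := d / 8). assert (HP : 0 < P) by (unfold P; lra).
  set (K := exp q). assert (HK : 0 < K) by apply exp_pos.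
  set (ea := Rpower (P / (2 * K)) (1 / (1 - a))).
  set (e := Rmin (d / 2) ea).
  assert (He : 0 < e <= d / 2).
  { split. apply Rmin_glb_lt; [lra|apply Rp_pos]. apply Rmin_l. }
  assert (Heps : Rpower e (1 - a) * exp (y ^ 2) <= P / 2).
  { fold q. fold K.
    assert (Rpower e (1 - a) <= Rpower ea (1 - a)).
    { apply Rle_Rpower_l; [lra|]. split; [lra|apply Rmin_r]. }
    unfold ea in H. rewrite Rpower_mult in H.
    replace (1 / (1 - a) * (1 - a)) with 1 in H by (field; lra).
    rewrite Rpower_1 in H by (apply Rdiv_lt_0_compat; lra).
    apply (Rmult_le_compat_r K) in H; [|lra].
    replace (P / (2 * K) * K) with (P / 2) in H by (field; lra). exact H. }
  assert (HJ := J_lower a y e d Ha Hy Hd Hqd He).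
  fold P in HJ.
  assert (HN : forall N, P / (2 * (2 * (1 / a + 1 / (1 - a)))) - (exp (y ^ 2) - sum_n (U (y ^ 2)) N)
              <= sum_n (fun k => r a k * cc k * (- y ^ 2) ^ k) N).
  { intro N. apply (perN a y e P N); auto; lra. }
  fold q in HN.
  set (c := P / (2 * (2 * (1 / a + 1 / (1 - a))))) in HN.
  assert (Hc : 0 < c).
  { unfold c. apply Rdiv_lt_0_compat; [lra|].
    assert (0 < 1 / a) by (apply Rdiv_lt_0_compat; lra).
    assert (0 < 1 / (1 - a)) by (apply Rdiv_lt_0_compat; lra). lra. }
  assert (L1 : is_lim_seq (fun N => c - (exp q - sum_n (U q) N)) (c - (exp q - exp q))).
  { apply is_lim_seq_minus'. apply is_lim_seq_const.
    apply is_lim_seq_minus'. apply is_lim_seq_const. exact (U_series q). }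
  assert (L2 : is_lim_seq (sum_n (fun k => r a k * cc k * (- q) ^ k)) (Series (fun k => r a k * cc k * (- q) ^ k))).
  { exact (Series_correct _ Hex). }
  assert (Hle := is_lim_seq_le _ _ _ _ HN L1 L2). simpl in Hle. lra.
Qed.

Theorem corollary1 :
  forall rho : R, 3 / 2 < rho < 2 ->
  exists a : R, 1 / 2 < a < 1 /\
    forall x : R, 0 < x ->
      ex_series (hyp1F2_term a (rho * a) (rho * a + 1 / 2) (- x ^ 2 / 4)) /\
      hyp1F2 a (rho * a) (rho * a + 1 / 2) (- x ^ 2 / 4) > 0.
Proof.
  intros rho Hrho.
  exists (3 / (2 * rho)).
  assert (Ha : 1 / 2 < 3 / (2 * rho) < 1).
  { split.
    - apply (Rmult_lt_reg_r (2 * rho)); [lra|]. unfold Rdiv. field_simplify; lra.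
    - apply (Rmult_lt_reg_r (2 * rho)); [lra|]. unfold Rdiv. field_simplify; lra. }
  split; [exact Ha|].
  intros x Hx.
  set (a := 3 / (2 * rho)) in *.
  assert (Hra : rho * a = 3 / 2) by (unfold a; field; lra).
  rewrite Hra. replace (3 / 2 + 1 / 2) with 2 by field.
  assert (Ext : forall k, r a k * cc k * (- x ^ 2 / 4) ^ k = hyp1F2_term a (3 / 2) 2 (- x ^ 2 / 4) k).
  { intro k. unfold hyp1F2_term, r, cc.
    assert (h1 := poch_ge1 (3/2) k ltac:(lra)).
    assert (h2 := poch_pos 2 k ltac:(lra)).
    assert (h3 := INR_fact_pos k).
    field. repeat split; lra. }
  destruct (key a x Ha Hx) as [Hex Hpos].
  split.
  - exact (ex_series_ext _ _ Ext Hex).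
  - unfold hyp1F2. rewrite <- (Series_ext _ _ Ext). exact Hpos.
Qed.
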